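(* Let $S\in\mathsf{Stab}(n,k)$, $E\in\bar{\mathcal{P}}_n$ and $x\in\{0,1\}^k$ be fixed. For any $n$-qubit Clifford $U$, the state $U E\ket{\overline{\psi_x}}^S$ equals $(UEU^\dagger)\,U\ket{\overline{\psi_x}}^S$, i.e. the encoding of $x$ under the stabilizer code $USU^\dagger$ (with encoding circuit $U U^S_{\mathrm{Enc}}$) acted upon by the error $UEU^\dagger$. Moreover, suppose $E$ has weight $w=O(\log^c n)$ for some integer $c>0$. Then for $U\sim\mathsf{PLC}_n$ uniform, the joint distribution of $(UEU^\dagger,USU^\dagger)$ is within total variation distance at most $1-1/O(n^{\log^c n})$ of the product distribution $\mathcal{U}_w\times\mathrm{Unif}(\{VSV^\dagger\}_{V\in\mathsf{PLC}_n})$.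
   Context: $\bar{\mathcal{P}}_n$ is the set of unsigned $n$-qubit Pauli operators; the weight of a Pauli is its number of non-identity tensor factors; $\mathcal{U}_w$ is the uniform distribution over the unsigned $n$-qubit Paulis of weight exactly $w$. $\mathsf{Stab}(n,k)$ is the set of stabilizer subgroups of the $n$-qubit Pauli group with $n-k$ independent commuting generators (not containing $-I$); $U^S_{\mathrm{Enc}}$ is a Clifford encoding circuit for $S$ and $\ket{\overline{\psi_x}}^S=U^S_{\mathrm{Enc}}(\ket{0^{n-k}}\otimes\ket{x})$. $\mathsf{PLC}_n$ is the group (modulo global phase) of $n$-qubit Cliffords of the form $(C_1\otimes\cdots\otimes C_n)\,\mathcal{Q}(\pi)$ with $C_i$ single-qubit Cliffords and $\mathcal{Q}(\pi)$ the operator permuting the $n$ qubits according to $\pi\in\mathfrak{S}_n$; $U\sim\mathsf{PLC}_n$ denotes the uniform distribution on this finite group. *)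

(* Defs.v *)
From HB Require Import structures.
From mathcomp Require Import all_boot all_order all_algebra all_fingroup all_field.
From mathcomp Require Import boolp reals exp.
Set Implicit Arguments. Unset Strict Implicit. Unset Printing Implicit Defensive.
Import Order.TTheory GRing.Theory Num.Theory.
Local Open Scope ring_scope.

Definition qbit (n : nat) (j : 'I_n) (i : 'I_(2 ^ n)) : bool := odd (i %/ 2 ^ j).
Definition b2o (b : bool) : 'I_2 := inord (nat_of_bool b).

Definition tens (n : nat) (C : 'I_n -> 'M[algC]_2) : 'M[algC]_(2 ^ n) :=
  \matrix_(i, i') \prod_(j < n) C j (b2o (qbit j i)) (b2o (qbit j i')).

(* qubit permutation operator Q(pi): sends qubit j to qubit pi j *)
Definition Qperm (n : nat) (pi : 'S_n) : 'M[algC]_(2 ^ n) :=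
  \matrix_(i, i') (([forall j, qbit (pi j) i == qbit j i'] : bool)%:R).

Definition ket (n : nat) (b : {ffun 'I_n -> bool}) : 'cV[algC]_(2 ^ n) :=
  \col_i (([forall j, qbit j i == b j] : bool)%:R).

Definition adj (m : nat) (U : 'M[algC]_m) : 'M[algC]_m := (map_mx (fun z : algC => z^*) U)^T.
Definition unitary (m : nat) (U : 'M[algC]_m) : Prop := U *m adj U = 1%:M.

(* 0 = I, 1 = X, 2 = Y, 3 = Z *)
Definition pauli1 (a : 'I_4) : 'M[algC]_2 :=
  \matrix_(r, s)
   (if val a == 0%N then (if r == s then 1 else 0)
    else if val a == 1%N then (if r != s then 1 else 0)
    else if val a == 2%N then
      (if r == s then 0 else if val r == 0%N then - 'i else 'i)
    else (if r == s then (if val r == 0%N then 1 else -1) else 0)).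

Definition upauli (n : nat) := {ffun 'I_n -> 'I_4}.
(* elements i^a P of the n-qubit Pauli group *)
Definition spauli (n : nat) := ('I_4 * upauli n)%type.

Definition pmat (n : nat) (p : upauli n) : 'M[algC]_(2 ^ n) :=
  tens (fun j => pauli1 (p j)).
Definition smat (n : nat) (s : spauli n) : 'M[algC]_(2 ^ n) :=
  ('i ^+ s.1) *: pmat s.2.

Definition weight (n : nat) (p : upauli n) : nat := #|[set j | p j != 0]|.

Definition is_clifford (n : nat) (U : 'M[algC]_(2 ^ n)) : Prop :=
  unitary U /\ forall s : spauli n, exists t : spauli n,
      smat t = U *m smat s *m adj U.

Definition conj_sp (n : nat) (U : 'M[algC]_(2 ^ n)) (s : spauli n) : spauli n :=
  odflt s [pick t | smat t == U *m smat s *m adj U].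

Definition conj_set (n : nat) (U : 'M[algC]_(2 ^ n)) (S : {set spauli n}) :
  {set spauli n} := [set conj_sp U s | s in S].

(* an n-qubit Clifford modulo global phase, represented by its (faithful)
   conjugation action on the Pauli group *)
Definition cact (n : nat) (U : 'M[algC]_(2 ^ n)) : {ffun spauli n -> spauli n} :=
  [ffun s => conj_sp U s].

Definition is_PLC (n : nat) (U : 'M[algC]_(2 ^ n)) : Prop :=
  exists (C : 'I_n -> 'M[algC]_(2 ^ 1)) (pi : 'S_n),
    (forall j, is_clifford (C j)) /\ U = tens C *m Qperm pi.

Definition PLC (n : nat) : {set {ffun spauli n -> spauli n}} :=
  [set f | `[< exists U, is_PLC U /\ cact U = f >] ].

Definition gprod (n m : nat) (g : 'I_m -> spauli n) (l : seq 'I_m) :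
  'M[algC]_(2 ^ n) := foldr (fun i A => smat (g i) *m A) 1%:M l.

Definition in_gen (n m : nat) (g : 'I_m -> spauli n) (s : spauli n) : Prop :=
  exists l : seq 'I_m, smat s = gprod g l.

Definition minusI (n : nat) : spauli n := (inord 2, [ffun => 0]).

Definition Stab (n k : nat) (S : {set spauli n}) : Prop :=
  (k <= n)%N /\
  (forall s t, s \in S -> t \in S -> smat s *m smat t = smat t *m smat s) /\
  minusI n \notin S /\
  exists g : 'I_(n - k) -> spauli n,
    (forall s, s \in S <-> in_gen g s) /\
    (forall i, ~ exists l : seq 'I_(n - k),
        all (fun j => j != i) l /\ smat (g i) = gprod g l).

Definition Zq (n : nat) (j : nat) : spauli n :=
  (0, [ffun i : 'I_n => if val i == j then inord 3 else 0]).

(* U is a Clifford encoding circuit for S (ancillas = first n-k qubits):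
   S is generated by U Z_j U^dagger, j < n-k *)
Definition is_encoder (n k : nat) (S : {set spauli n}) (U : 'M[algC]_(2 ^ n)) : Prop :=
  is_clifford U /\
  forall s, s \in S <-> in_gen (fun j : 'I_(n - k) => conj_sp U (Zq n j)) s.

(* |0^{n-k}> (x) |x> *)
Definition anc_ket (n k : nat) (x : {ffun 'I_k -> bool}) : 'cV[algC]_(2 ^ n) :=
  ket [ffun j : 'I_n => if (j < n - k)%N then false
                        else if [pick i : 'I_k | val i == (j - (n - k))%N] is Some i
                        then x i else false].

Definition enc_state (n k : nat) (U : 'M[algC]_(2 ^ n)) (x : {ffun 'I_k -> bool}) :
  'cV[algC]_(2 ^ n) := U *m @anc_ket n k x.

Section Dist.
Variable R : realType.

(* joint law of (U E U^dagger (unsigned), U S U^dagger), U ~ PLC_n *)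
Definition joint_law (n : nat) (S : {set spauli n}) (E : upauli n)
  (z : upauli n * {set spauli n}) : R :=
  #|[set f in PLC n | ((f (0, E)).2, f @: S) == z]|%:R / #|PLC n|%:R.

Definition unif_w (n w : nat) (e : upauli n) : R :=
  if weight e == w then 1 / #|[set p : upauli n | weight p == w]|%:R else 0.

Definition code_orbit (n : nat) (S : {set spauli n}) : {set {set spauli n}} :=
  [set f @: S | f : {ffun spauli n -> spauli n} in PLC n].
Definition unif_orbit (n : nat) (S : {set spauli n}) (T : {set spauli n}) : R :=
  if T \in code_orbit S then 1 / #|code_orbit S|%:R else 0.

Definition tv_dist (T : finType) (p q : T -> R) : R :=
  2^-1 * \sum_(z : T) `|p z - q z|.

Definition tv_joint_product (n w : nat) (S : {set spauli n}) (E : upauli n) : R :=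
  tv_dist (joint_law S E) (fun z => unif_w w z.1 * unif_orbit S z.2).
End Dist.
Arguments Stab : clear implicits.
Arguments is_encoder {n} k S U.
Arguments tv_joint_product R {n} w S E.

(* Main.v *)
Require Import Defs.
From HB Require Import structures.
From mathcomp Require Import all_boot all_order all_algebra all_fingroup all_field.
From mathcomp Require Import boolp reals exp.
Set Implicit Arguments. Unset Strict Implicit. Unset Printing Implicit Defensive.
Import Order.TTheory GRing.Theory Num.Theory.
Local Open Scope ring_scope.
From mathcomp Require Import lra.

Lemma bits_inj_nat (n a b : nat) : (a < 2 ^ n)%N -> (b < 2 ^ n)%N ->
  (forall j, (j < n)%N -> odd (a %/ 2 ^ j) = odd (b %/ 2 ^ j)) -> a = b.
Proof.
elim: n a b => [|n IH] a b.
  by rewrite expn0 !ltnS !leqn0 => /eqP-> /eqP->.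
move=> ha hb h.
have h0 := h 0%N isT; rewrite expn0 !divn1 in h0.
have e : a./2 = b./2.
  apply: IH.
  - by rewrite -divn2 ltn_divLR // -expnSr.
  - by rewrite -divn2 ltn_divLR // -expnSr.
  move=> j hj; rewrite -!divn2 -!divnMA -expnS; exact: h.
by rewrite -[a]odd_double_half -[b]odd_double_half e h0.
Qed.

Definition bo (n : nat) (i : 'I_(2 ^ n)) : {ffun 'I_n -> 'I_2} :=
  [ffun j => b2o (qbit j i)].

Lemma b2oE b : nat_of_ord (b2o b) = nat_of_bool b.
Proof. by rewrite /b2o inordK //; case: b. Qed.

Lemma b2o_inj : injective b2o.
Proof. by move=> b b' /(congr1 (@nat_of_ord 2)); rewrite !b2oE; case: b; case: b'. Qed.

Lemma bo_inj n : injective (@bo n).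
Proof.
move=> i i' /ffunP h; apply: val_inj; apply: (@bits_inj_nat n); rewrite ?ltn_ord //.
move=> j hj; have := h (Ordinal hj); rewrite !ffunE => /b2o_inj.
by rewrite /qbit.
Qed.

Lemma bo_bij n : bijective (@bo n).
Proof.
apply: inj_card_bij; first exact: bo_inj.
by rewrite card_ffun !card_ord.
Qed.

Lemma ord_gt0 n : (0 < 2 ^ n)%N. Proof. by rewrite expn_gt0. Qed.

Definition idx (n : nat) (b : {ffun 'I_n -> 'I_2}) : 'I_(2 ^ n) :=
  odflt (Ordinal (ord_gt0 n)) [pick i | bo i == b].

Lemma boK n : cancel (@bo n) (@idx n).
Proof.
move=> i; rewrite /idx; case: pickP => [i' /eqP /bo_inj //|/(_ i)].
by rewrite eqxx.
Qed.

Lemma idxK n : cancel (@idx n) (@bo n).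
Proof.
move=> b; have [g h1 h2] := bo_bij n.
by rewrite -[b]h2 boK.
Qed.

Lemma idx_bij n : bijective (@idx n).
Proof. by exists (@bo n); [apply: idxK| apply: boK]. Qed.

Lemma sum_bits n (F : 'I_(2 ^ n) -> algC) :
  \sum_i F i = \sum_(b : {ffun 'I_n -> 'I_2}) F (idx b).
Proof. by rewrite (reindex (@idx n)) //; apply: onW_bij; exact: idx_bij. Qed.

Lemma tensE n (C : 'I_n -> 'M[algC]_2) i i' :
  tens C i i' = \prod_j C j (bo i j) (bo i' j).
Proof. by rewrite mxE; apply: eq_bigr => j _; rewrite !ffunE. Qed.


Definition qs n (pi : 'S_n) (i : 'I_(2 ^ n)) : 'I_(2 ^ n) :=
  idx [ffun j => bo i (pi j)].

Lemma bo_qs n (pi : 'S_n) i j : bo (qs pi i) j = bo i (pi j).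
Proof. by rewrite idxK ffunE. Qed.

Lemma qsK n (pi : 'S_n) : cancel (qs pi) (qs pi^-1).
Proof.
move=> i; apply: bo_inj; apply/ffunP => j.
by rewrite bo_qs bo_qs permKV.
Qed.

Lemma qsKV n (pi : 'S_n) : cancel (qs pi^-1) (qs pi).
Proof.
move=> i; apply: bo_inj; apply/ffunP => j.
by rewrite bo_qs bo_qs permK.
Qed.

Lemma QpermE n (pi : 'S_n) i i' : Qperm pi i i' = (i' == qs pi i)%:R.
Proof.
rewrite mxE; congr ((nat_of_bool _)%:R). apply/fintype.forallP/eqP.
  move=> h; apply: bo_inj; apply/ffunP => j; rewrite bo_qs !ffunE.
  by rewrite (eqP (h j)).
move=> -> j.
have := bo_qs pi i j; rewrite !ffunE => /b2o_inj ->.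
by [].
Qed.

Lemma mulQmxE n (pi : 'S_n) (M : 'M[algC]_(2 ^ n)) i i' :
  (Qperm pi *m M) i i' = M (qs pi i) i'.
Proof.
rewrite mxE (bigD1 (qs pi i)) //= QpermE eqxx mul1r big1 ?addr0 //.
by move=> k /negbTE hk; rewrite QpermE hk mul0r.
Qed.

Lemma mulmxQE n (pi : 'S_n) (M : 'M[algC]_(2 ^ n)) i i' :
  (M *m Qperm pi) i i' = M i (qs pi^-1 i').
Proof.
rewrite mxE (bigD1 (qs pi^-1 i')) //= QpermE qsKV eqxx mulr1 big1 ?addr0 //.
move=> k hk; rewrite QpermE; case: eqP => [e|]; last by rewrite mulr0.
by move: hk; rewrite e qsK eqxx.
Qed.

Lemma Q_mul n (pi rho : 'S_n) : Qperm pi *m Qperm rho = Qperm (rho * pi).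
Proof.
apply/matrixP => i i'; rewrite mulQmxE !QpermE.
suff -> : qs rho (qs pi i) = qs (rho * pi) i by [].
apply: bo_inj; apply/ffunP => j; by rewrite !bo_qs permM.
Qed.

Lemma qs1 n i : qs (1 : 'S_n) i = i.
Proof. by apply: bo_inj; apply/ffunP => j; rewrite bo_qs perm1. Qed.

Lemma Q1 n : Qperm (1 : 'S_n) = 1%:M.
Proof.
by apply/matrixP => i i'; rewrite QpermE qs1 mxE eq_sym.
Qed.

Lemma Q_tens n (pi : 'S_n) (C : 'I_n -> 'M[algC]_2) :
  Qperm pi *m tens C = tens (fun j => C ((pi^-1)%g j)) *m Qperm pi.
Proof.
apply/matrixP => i i'; rewrite mulQmxE mulmxQE !tensE.
rewrite [RHS](reindex_inj (@perm_inj _ pi)) /=; apply: eq_bigr => j _.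
by rewrite permK bo_qs bo_qs permK.
Qed.

Lemma tens1 n : tens (fun _ : 'I_n => (1%:M : 'M[algC]_2)) = 1%:M.
Proof.
apply/matrixP => i i'; rewrite tensE [RHS]mxE.
case: eqP => [->|ne].
  by rewrite big1 // => j _; rewrite mxE eqxx.
have [j hj] : exists j, bo i j != bo i' j.
  apply/fintype.existsP; apply: contraT; rewrite negb_exists => /fintype.forallP h.
  by case: ne; apply: bo_inj; apply/ffunP => j; apply/eqP; have := h j; rewrite negbK.
by rewrite (bigD1 j) //= mxE (negbTE hj) mul0r.
Qed.

Definition conjm m (A : 'M[algC]_m) := map_mx (fun z : algC => z^*) A.

Lemma adj_mul m (A B : 'M[algC]_m) : adj (A *m B) = adj B *m adj A.
Proof. by rewrite /adj map_mxM trmx_mul. Qed.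

Lemma adj1 m : adj (1%:M : 'M[algC]_m) = 1%:M.
Proof. by rewrite /adj map_mx1 trmx1. Qed.

Lemma adjK m (A : 'M[algC]_m) : adj (adj A) = A.
Proof. by apply/matrixP => i j; rewrite !mxE conjCK. Qed.

Lemma adjZ m a (A : 'M[algC]_m) : adj (a *: A) = a^* *: adj A.
Proof. by apply/matrixP => i j; rewrite !mxE rmorphM. Qed.

Lemma adjE m (A : 'M[algC]_m) i j : adj A i j = (A j i)^*.
Proof. by rewrite !mxE. Qed.

Lemma adj_tens n (C : 'I_n -> 'M[algC]_2) :
  adj (tens C) = tens (fun j => adj (C j)).
Proof.
apply/matrixP => i i'; rewrite adjE !tensE rmorph_prod.
by apply: eq_bigr => j _; rewrite adjE.
Qed.

Lemma adjQ n (pi : 'S_n) : adj (Qperm pi) = Qperm pi^-1.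
Proof.
apply/matrixP => i i'; rewrite adjE !QpermE conjC_nat.
congr ((nat_of_bool _)%:R); apply/eqP/eqP => ->; by rewrite ?qsK ?qsKV.
Qed.

Lemma tensZ n (a : 'I_n -> algC) (C : 'I_n -> 'M[algC]_2) :
  tens (fun j => a j *: C j) = (\prod_j a j) *: tens C.
Proof.
apply/matrixP => i i'; rewrite [RHS]mxE !tensE -big_split /=.
by apply: eq_bigr => j _; rewrite mxE.
Qed.

Lemma b2o_odd (i : 'I_2) : b2o (odd i) = i.
Proof. by apply: val_inj => /=; rewrite b2oE; case: i => [[|[|]]]. Qed.

Lemma tens_n1 (C : 'I_1 -> 'M[algC]_2) : tens C = C ord0.
Proof.
apply/matrixP => i i'; rewrite tensE big_ord1 !ffunE /qbit /= !expn0 !divn1.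
by rewrite !b2o_odd.
Qed.

Lemma tens_mul n (A B : 'I_n -> 'M[algC]_2) :
  tens A *m tens B = tens (fun j => A j *m B j).
Proof.
apply/matrixP => i i'. rewrite [LHS]mxE [RHS]tensE sum_bits.
under [RHS]eq_bigr => j _ do rewrite mxE.
rewrite bigA_distr_bigA /=; apply: eq_bigr => b _.
by rewrite !tensE idxK -big_split.
Qed.

Lemma tens_tr n (C : 'I_n -> 'M[algC]_2) : \tr (tens C) = \prod_j \tr (C j).
Proof.
rewrite /mxtrace sum_bits bigA_distr_bigA; apply: eq_bigr => b _.
by rewrite tensE idxK.
Qed.
Lemma i2 : 'i ^+ 2 = -1 :> algC.
Proof. exact: sqrCi. Qed.
Lemma tr_pauli (a b : 'I_4) :
  \tr (pauli1 a *m pauli1 b) = if a == b then 2 else 0.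
Proof.
case: a => [[|[|[|[|//]]]] ha]; case: b => [[|[|[|[|//]]]] hb];
rewrite /mxtrace !big_ord_recr !big_ord0 /= !mxE !big_ord_recr !big_ord0 /= !mxE /=.
all: rewrite ?(mul0r, mulr0, mul1r, mulr1, add0r, addr0, mulNr, mulrN, opprK, mulN1r, subrr) //.
all: rewrite -?expr2 ?sqrCi ?opprK ?addrN ?addNr //.

Qed.

Lemma pauli1_0 : pauli1 0 = 1%:M.
Proof. by apply/matrixP => r s; rewrite !mxE /=; case: (r == s). Qed.

Lemma pmat_tr n (p q : upauli n) :
  \tr (pmat p *m pmat q) = \prod_j (if p j == q j then 2 else 0).
Proof. by rewrite /pmat tens_mul tens_tr; apply: eq_bigr => j _; rewrite tr_pauli. Qed.

Lemma pmat_tr_same n (p : upauli n) : \tr (pmat p *m pmat p) = 2 ^+ n.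
Proof. by rewrite pmat_tr (eq_bigr (fun _ => 2)) ?prodr_const ?card_ord // => j _; rewrite eqxx. Qed.

Lemma pmat_tr_diff n (p q : upauli n) : p != q -> \tr (pmat p *m pmat q) = 0.
Proof.
move=> ne; have [j hj] : exists j, p j != q j.
  apply/fintype.existsP; apply: contraT; rewrite negb_exists => /fintype.forallP h.
  have e : p = q.
    by apply/ffunP => j; apply/eqP; have := h j; rewrite negbK.
  by rewrite e eqxx in ne.
by rewrite pmat_tr (bigD1 j) //= (negbTE hj) mul0r.
Qed.

Lemma i4 : 'i ^+ 4 = 1 :> algC.
Proof. by rewrite (exprM _ 2 2) sqrCi sqrrN expr1n. Qed.

Lemma iexp_neq0 (a : nat) : 'i ^+ a != 0 :> algC.
Proof. by rewrite expf_neq0 // neq0Ci. Qed.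

Lemma two_neq0 : (2 : algC) != 0.
Proof. by rewrite pnatr_eq0. Qed.

Lemma neg1_neq1 : (-1 : algC) != 1.
Proof.
apply/eqP => h; have := two_neq0; rewrite -[2]/(1 + 1 : algC).
by rewrite -{1}h addNr eqxx.
Qed.

Lemma iexp_inj (a b : 'I_4) : 'i ^+ a = 'i ^+ b :> algC -> a = b.
Proof.
wlog le : a b / (a <= b)%N.
  by move=> W h; case: (leqP a b) => [/W -> //| /ltnW /W h2]; rewrite (h2 (esym h)).
move=> h.
have h1 : 'i ^+ (b - a) = 1 :> algC.
  apply: (mulfI (iexp_neq0 a)); by rewrite mulr1 -exprD subnKC.
apply: val_inj => /=.
have : (b - a < 4)%N by rewrite (leq_ltn_trans (leq_subr _ _)).
move: h1; case E: (b - a)%N => [|[|[|[|d]]]] //.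
- by move=> _ _; apply/eqP; rewrite eqn_leq le /= -subn_eq0 E.
- by rewrite expr1 => hi; move: neg1_neq1; rewrite -sqrCi hi expr1n eqxx.
- by rewrite sqrCi => hi; move: neg1_neq1; rewrite hi eqxx.
- rewrite exprS sqrCi mulrN1 => hi; move: neg1_neq1.
  by rewrite -sqrCi -(opprK 'i) hi sqrrN expr1n eqxx.
Qed.

Lemma smat_inj n : injective (@smat n).
Proof.
move=> [a p] [b q]; rewrite /smat /= => h.
have h2 := congr1 (fun M => \tr (M *m pmat p)) h; move: h2 => /=.
rewrite -!scalemxAl !mxtraceZ pmat_tr_same.
have [epq|ne] := eqVneq q p; last first.
  rewrite pmat_tr_diff // mulr0 => /eqP; rewrite mulf_eq0 (negbTE (iexp_neq0 _)) /=.
  by rewrite expf_eq0 (negbTE two_neq0) andbF.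
subst q; rewrite pmat_tr_same => /(mulIf (expf_neq0 _ two_neq0)) /iexp_inj.
by move=> ->.
Qed.

Lemma unitaryV m (U : 'M[algC]_m) : unitary U -> adj U *m U = 1%:M.
Proof. exact: mulmx1C. Qed.

Lemma cancel_conj m (U A B : 'M[algC]_m) : unitary U ->
  U *m A *m adj U = U *m B *m adj U -> A = B.
Proof.
move=> hU h.
have e : forall X, adj U *m (U *m X *m adj U) *m U = X.
  move=> X; by rewrite !mulmxA (unitaryV hU) mul1mx -mulmxA (unitaryV hU) mulmx1.
by rewrite -(e A) h e.
Qed.

Lemma conj_spP n (U : 'M[algC]_(2 ^ n)) s : is_clifford U ->
  smat (conj_sp U s) = U *m smat s *m adj U.
Proof.
move=> hU; rewrite /conj_sp; case: pickP => [t /eqP -> //| h].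
have [t ht] := hU.2 s; by move: (h t); rewrite ht eqxx.
Qed.

Lemma conj_sp_inj n (U : 'M[algC]_(2 ^ n)) : is_clifford U -> injective (conj_sp U).
Proof.
move=> hU s1 s2 e; apply: smat_inj; have := congr1 (@smat n) e.
rewrite !conj_spP //; exact: (cancel_conj hU.1).
Qed.

Lemma conj_sp_surj n (U : 'M[algC]_(2 ^ n)) s : is_clifford U ->
  exists s0, conj_sp U s0 = s.
Proof.
move=> hU; have [g h1 h2] := injF_bij (conj_sp_inj hU).
by exists (g s); rewrite h2.
Qed.

Lemma clifford_mul n (U V : 'M[algC]_(2 ^ n)) :
  is_clifford U -> is_clifford V -> is_clifford (U *m V).
Proof.
move=> hU hV; split.
  rewrite /unitary adj_mul mulmxA -(mulmxA U) hV.1 mulmx1; exact: hU.1.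
move=> s; exists (conj_sp U (conj_sp V s)).
by rewrite !conj_spP // adj_mul !mulmxA.
Qed.

Lemma clifford_adj n (U : 'M[algC]_(2 ^ n)) :
  is_clifford U -> is_clifford (adj U).
Proof.
move=> hU; split.
  by rewrite /unitary adjK (unitaryV hU.1).
move=> s; have [s0 <-] := conj_sp_surj s hU.
exists s0; rewrite conj_spP // adjK.
by rewrite !mulmxA (unitaryV hU.1) mul1mx -mulmxA (unitaryV hU.1) mulmx1.
Qed.

Lemma conj_sp_mul n (U V : 'M[algC]_(2 ^ n)) s :
  is_clifford U -> is_clifford V ->
  conj_sp (U *m V) s = conj_sp U (conj_sp V s).
Proof.
move=> hU hV; apply: smat_inj.
rewrite (conj_spP _ (clifford_mul hU hV)) (conj_spP _ hU) (conj_spP _ hV).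
by rewrite adj_mul !mulmxA.
Qed.

Lemma clifford1 n : is_clifford (1%:M : 'M[algC]_(2 ^ n)).
Proof.
split; first by rewrite /unitary adj1 mulmx1.
by move=> s; exists s; rewrite adj1 mulmx1 mul1mx.
Qed.

Lemma conj_sp1 n (s : spauli n) : conj_sp 1%:M s = s.
Proof. apply: smat_inj; by rewrite (conj_spP _ (clifford1 n)) mul1mx /adj map_mx1 trmx1 mulmx1. Qed.

Lemma gprod_conj n m (U : 'M[algC]_(2 ^ n)) (g : 'I_m -> spauli n) l :
  is_clifford U ->
  gprod (fun i => conj_sp U (g i)) l = U *m gprod g l *m adj U.
Proof.
move=> hU; elim: l => [|i l IH] /=.
  by rewrite mulmx1 hU.1.
rewrite IH conj_spP // !mulmxA -(mulmxA _ (adj U) U) (unitaryV hU.1) mulmx1.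
by [].
Qed.

Lemma conj_in_gen n m (U : 'M[algC]_(2 ^ n)) (g : 'I_m -> spauli n) (S : {set spauli n}) :
  is_clifford U -> (forall s, s \in S <-> in_gen g s) ->
  forall s, s \in conj_set U S <-> in_gen (fun i => conj_sp U (g i)) s.
Proof.
move=> hU hS s; split.
  case/imsetP => s0 /hS [l hl] ->; exists l.
  by rewrite gprod_conj // conj_spP // hl.
case=> l hl; have [s0 e] := conj_sp_surj s hU.
apply/imsetP; exists s0 => //; apply/hS; exists l.
apply: (cancel_conj hU.1); by rewrite -conj_spP // e hl gprod_conj.
Qed.

Lemma smat_minusI n : smat (minusI n) = (-1) *: 1%:M.
Proof.
rewrite /smat /minusI /= inordK // sqrCi /pmat.
have -> : (fun j : 'I_n => pauli1 (([ffun=> 0] : upauli n) j)) = fun _ => 1%:M.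
  by apply: boolp.funext => j; rewrite ffunE pauli1_0.
by rewrite tens1.
Qed.

Lemma conj_minusI n (U : 'M[algC]_(2 ^ n)) : is_clifford U -> conj_sp U (minusI n) = minusI n.
Proof.
move=> hU; apply: smat_inj; rewrite conj_spP // smat_minusI.
by rewrite -scalemxAr mulmx1 -scalemxAl hU.1.
Qed.

Lemma part1 (n k : nat) (S : {set spauli n}) (E : upauli n)
          (x : {ffun 'I_k -> bool}) (Uenc U : 'M[algC]_(2 ^ n)) :
      Stab n k S -> is_encoder k S Uenc -> is_clifford U ->
      U *m (pmat E *m enc_state Uenc x)
        = (U *m pmat E *m adj U) *m (U *m enc_state Uenc x)
      /\ U *m pmat E *m adj U = smat (conj_sp U (0, E))
      /\ Stab n k (conj_set U S)
      /\ is_encoder k (conj_set U S) (U *m Uenc)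
      /\ U *m enc_state Uenc x = enc_state (U *m Uenc) x.
Proof.
move=> hS hE hU; split.
  rewrite !mulmxA -(mulmxA (U *m pmat E) (adj U) U) (unitaryV hU.1) mulmx1.
  by [].
split; first by rewrite conj_spP // /smat /= expr0 scale1r.
split.
  case: hS => hk [hcomm [hmi [g [hg hind]]]].
  split => //; split.
    move=> s t /imsetP [s0 hs0 ->] /imsetP [t0 ht0 ->]; rewrite !conj_spP //.
    rewrite !mulmxA -(mulmxA _ (adj U) U) (unitaryV hU.1) mulmx1.
    rewrite -(mulmxA _ (adj U) U) (unitaryV hU.1) mulmx1.
    by rewrite -(mulmxA U) hcomm // mulmxA.
  split.
    apply/negP => /imsetP [s0 hs0 e].
    move: e; rewrite -(conj_minusI hU) => /(conj_sp_inj hU) e.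
    by move: hmi; rewrite e hs0.
  exists (fun i => conj_sp U (g i)); split; first exact: conj_in_gen.
  move=> i [l [hl he]]; apply: (hind i); exists l; split => //.
  move: he; rewrite conj_spP // gprod_conj //; exact: (cancel_conj hU.1).
split; last by rewrite /enc_state mulmxA.
split; first exact: clifford_mul hU hE.1.
move=> s; rewrite (conj_in_gen hU hE.2).
have -> : (fun i : 'I_(n - k) => conj_sp (U *m Uenc) (Zq n i))
   = (fun i => conj_sp U (conj_sp Uenc (Zq n i))).
  by apply: boolp.funext => i; rewrite (conj_sp_mul _ hU hE.1).
by [].
Qed.

Lemma smat1E (s : spauli 1) : smat s = 'i ^+ s.1 *: pauli1 (s.2 ord0).
Proof. by rewrite /smat /pmat tens_n1. Qed.

Lemma smat_scalar n (c : 'I_4) : smat (c, ([ffun=> 0] : upauli n)) = 'i ^+ c *: 1%:M.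
Proof.
rewrite /smat /= /pmat.
have -> : (fun j : 'I_n => pauli1 (([ffun=> 0] : upauli n) j)) = fun _ => 1%:M.
  by apply: boolp.funext => j; rewrite ffunE pauli1_0.
by rewrite tens1.
Qed.

Lemma conj_scalar n (U : 'M[algC]_(2 ^ n)) c : is_clifford U ->
  conj_sp U (c, [ffun=> 0]) = (c, [ffun=> 0]).
Proof.
move=> hU; apply: smat_inj; rewrite conj_spP // smat_scalar.
by rewrite -scalemxAr mulmx1 -scalemxAl hU.1.
Qed.

Lemma conj1_nz (C : 'M[algC]_(2 ^ 1)) (a : 'I_4) : is_clifford C ->
  ((conj_sp C (0, [ffun=> a])).2 ord0 == 0) = (a == 0).
Proof.
move=> hC; apply/eqP/eqP => h.
  set t := conj_sp C _ in h.
  have et : t = (t.1, [ffun=> 0]).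
    by case: t h => c q /= h; congr (_, _); apply/ffunP => j; rewrite ord1 ffunE.
  have := et; rewrite -(conj_scalar t.1 hC) /t => /(conj_sp_inj hC) [_].
  by move/ffunP => /(_ ord0); rewrite !ffunE.
subst a; by rewrite (conj_scalar 0 hC) ffunE.
Qed.

Lemma conj1E (C : 'M[algC]_(2 ^ 1)) (a : 'I_4) : is_clifford C ->
  C *m pauli1 a *m adj C =
  'i ^+ (conj_sp C (0, [ffun=> a])).1 *: pauli1 ((conj_sp C (0, [ffun=> a])).2 ord0).
Proof.
move=> hC; rewrite -smat1E conj_spP // smat1E /= ffunE expr0 scale1r.
by [].
Qed.

Lemma iexp_mod (m : nat) : 'i ^+ m = 'i ^+ (m %% 4) :> algC.
Proof. by rewrite {1}(divn_eq m 4) exprD mulnC exprM i4 expr1n mul1r. Qed.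

Lemma smat_scale n (a : nat) (t : spauli n) :
  'i ^+ a *: smat t = smat (inord ((a + t.1) %% 4), t.2).
Proof.
by rewrite /smat scalerA -exprD inordK ?ltn_pmod // -iexp_mod.
Qed.

Lemma plc_form n (C : 'I_n -> 'M[algC]_(2 ^ 1)) (pi : 'S_n) (p : upauli n) :
  (forall j, is_clifford (C j)) ->
  exists t : spauli n,
    smat t = tens C *m Qperm pi *m pmat p *m adj (tens C *m Qperm pi)
    /\ weight t.2 = weight p.
Proof.
move=> hC.
pose t j := conj_sp (C j) (0, [ffun=> p ((pi^-1)%g j)]).
exists (inord ((\sum_j (nat_of_ord (t j).1)) %% 4), [ffun j => (t j).2 ord0]).
split.
  rewrite adj_mul adjQ adj_tens /pmat.
  rewrite -!mulmxA (mulmxA (Qperm pi)) Q_tens -!mulmxA (mulmxA (Qperm pi)) Q_mul mulVg Q1 mul1mx.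
  rewrite !tens_mul.
  have -> : (fun j => C j *m (pauli1 (p ((pi^-1)%g j)) *m adj (C j)))
     = (fun j => 'i ^+ (t j).1 *: pauli1 ((t j).2 ord0)).
    by apply: boolp.funext => j; rewrite mulmxA conj1E.
  rewrite tensZ /smat /= inordK ?ltn_pmod // -iexp_mod -prodrXr.
  rewrite /pmat; congr (_ *: tens _); apply: boolp.funext => j; by rewrite ffunE.
rewrite /weight /=.
have -> : [set j | [ffun j => (t j).2 ord0] j != 0] = pi @: [set j | p j != 0].
  apply/setP => j; rewrite inE ffunE conj1_nz //.
  apply/idP/imsetP => [h|[j' hj' ->]].
    by exists ((pi^-1)%g j); rewrite ?inE // permKV.
  by rewrite permK; rewrite inE in hj'.
by rewrite card_imset //; exact: perm_inj.
Qed.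

Lemma plc_clifford n (U : 'M[algC]_(2 ^ n)) : is_PLC U -> is_clifford U.
Proof.
case=> C [pi [hC ->]]; split.
  rewrite /unitary adj_mul adjQ adj_tens -mulmxA (mulmxA (Qperm pi)) Q_mul mulVg Q1.
  rewrite mul1mx tens_mul.
  have -> : (fun j => C j *m adj (C j)) = fun _ => 1%:M.
    by apply: boolp.funext => j; exact: (hC j).1.
  exact: tens1.
case=> a p; have [t [ht _]] := plc_form pi p hC.
exists (inord ((a + t.1) %% 4), t.2).
by rewrite -smat_scale ht /smat /= -scalemxAr -scalemxAl.
Qed.

Lemma plc_weight n (U : 'M[algC]_(2 ^ n)) (p : upauli n) : is_PLC U ->
  weight (conj_sp U (0, p)).2 = weight p.
Proof.
move=> hU; have hc := plc_clifford hU.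
case: hU => C [pi [hC eU]].
have [t [ht hw]] := plc_form pi p hC.
have -> : conj_sp U (0, p) = t.
  apply: smat_inj; rewrite conj_spP // ht -eU /smat /= expr0 scale1r.
  by [].
exact: hw.
Qed.

Lemma plc_mul n (U V : 'M[algC]_(2 ^ n)) : is_PLC U -> is_PLC V -> is_PLC (U *m V).
Proof.
case=> C [pi [hC ->]]; case=> D [rho [hD ->]].
exists (fun j => C j *m D ((pi^-1)%g j)), (rho * pi)%g; split.
  move=> j; exact: (@clifford_mul 1 (C j) (D ((pi^-1)%g j)) (hC j) (hD _)).
rewrite -!mulmxA (mulmxA (Qperm pi)) Q_tens -!mulmxA Q_mul !mulmxA tens_mul.
by [].
Qed.

Lemma plc_adj n (U : 'M[algC]_(2 ^ n)) : is_PLC U -> is_PLC (adj U).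
Proof.
case=> C [pi [hC ->]].
exists (fun j => adj (C (pi j))), (pi^-1)%g; split.
  move=> j; exact: (@clifford_adj 1 (C (pi j)) (hC _)).
rewrite adj_mul adjQ adj_tens Q_tens invgK.
by [].
Qed.

Lemma plc1 n : is_PLC (1%:M : 'M[algC]_(2 ^ n)).
Proof.
exists (fun _ => 1%:M), 1%g; split.
  move=> j; exact: (@clifford1 1).
by rewrite Q1 mulmx1 tens1.
Qed.
Section NatCount.
Local Open Scope nat_scope.

Lemma card_supp n (A : {set 'I_n}) :
  #|[set p : upauli n | [set j | p j != 0%R] == A]| <= 3 ^ #|A|.
Proof.
have h3 : #|predC1 (0%R : 'I_4)| = 3 by rewrite cardC1 card_ord.
apply: (@leq_trans #|pffun_on (0%R : 'I_4) A (predC1 (0%R : 'I_4))|); last first.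
  by rewrite card_pffun_on h3.
apply: subset_leq_card; apply/subsetP => p.
rewrite inE => /eqP hA; apply/pffun_onP; split.
  by apply/subsetP => j; rewrite inE => hj; rewrite -hA inE.
by move=> _ /imageP [j hj ->]; rewrite inE /=; move: hj; rewrite -hA inE.
Qed.

Lemma card_weight_le n w :
  #|[set p : upauli n | weight p == w]| <= 'C(n, w) * 3 ^ w.
Proof.
have -> : 'C(n, w) = #|[set A : {set 'I_n} | #|A| == w]| by rewrite card_draws card_ord.
have -> : #|[set p : upauli n | weight p == w]|
   = \sum_(A in [set A : {set 'I_n} | #|A| == w]) #|[set p : upauli n | [set j | p j != 0%R] == A]|.
  rewrite -sum1_card.
  rewrite (partition_big (fun p : upauli n => [set j | p j != 0%R]) (mem [set A : {set 'I_n} | #|A| == w])).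
    apply: eq_bigr => A hA; rewrite -sum1_card; apply: eq_bigl => p.
    rewrite !inE andbC; case: eqP => [e|] //=.
    by move: hA; rewrite /weight e !inE => h; exact: h.
  by move=> p; rewrite !inE.
rewrite -sum_nat_const; apply: leq_sum => A; rewrite inE => /eqP <-.
exact: card_supp.
Qed.

Lemma ffact_le n w : n ^_ w <= n ^ w.
Proof.
rewrite ffact_prod; apply: (@leq_trans (\prod_(i < w) n)).
  by apply: leq_prod => i _; exact: leq_subr.
by rewrite prod_nat_const card_ord.
Qed.

Lemma pow3_le w : 3 ^ w <= 6 * w`!.
Proof.
elim: w => [//|w IH].
case: (leqP w 2) => hw.
  by case: w hw IH => [|[|[|]]].
rewrite expnS factS mulnCA; apply: leq_mul; [exact: leqW hw | exact: IH].
Qed.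

Lemma Nw_le n w : #|[set p : upauli n | weight p == w]| <= 6 * n ^ w.
Proof.
rewrite -(@leq_pmul2r w`!) ?fact_gt0 //.
apply: (leq_trans (leq_mul (card_weight_le n w) (leqnn _))).
rewrite mulnAC bin_ffact mulnC (mulnC 6) -mulnA.
by rewrite mulnC; apply: leq_mul; [exact: ffact_le | exact: pow3_le].
Qed.

End NatCount.

Lemma PLCP n (f : {ffun spauli n -> spauli n}) :
  f \in PLC n <-> exists U, is_PLC U /\ cact U = f.
Proof. by rewrite inE; split => [/asboolP|h] //; apply/asboolP. Qed.

Definition compf n (f g : {ffun spauli n -> spauli n}) : {ffun spauli n -> spauli n} :=
  [ffun s => f (g s)].

Lemma cact_mul n (U V : 'M[algC]_(2 ^ n)) : is_clifford U -> is_clifford V ->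
  cact (U *m V) = compf (cact U) (cact V).
Proof. by move=> hU hV; apply/ffunP => s; rewrite !ffunE conj_sp_mul. Qed.

Lemma PLC_comp n (f g : {ffun spauli n -> spauli n}) :
  f \in PLC n -> g \in PLC n -> compf f g \in PLC n.
Proof.
move=> /PLCP [U [hU <-]] /PLCP [V [hV <-]]; apply/PLCP; exists (U *m V); split.
  exact: plc_mul.
by rewrite cact_mul //; apply: plc_clifford.
Qed.

Lemma PLC_id n : [ffun s => s] \in PLC n.
Proof.
apply/PLCP; exists 1%:M; split; first exact: plc1.
by apply/ffunP => s; rewrite !ffunE conj_sp1.
Qed.

Lemma PLC_inv n (f : {ffun spauli n -> spauli n}) : f \in PLC n ->
  exists2 g, g \in PLC n & (forall s, g (f s) = s) /\ (forall s, f (g s) = s).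
Proof.
move=> /PLCP [U [hU <-]]; have hc := plc_clifford hU.
have hc' := clifford_adj hc.
exists (cact (adj U)); first by apply/PLCP; exists (adj U); split => //; apply: plc_adj.
split => s; rewrite !ffunE -conj_sp_mul //.
  by rewrite (unitaryV hc.1) conj_sp1.
by rewrite hc.1 conj_sp1.
Qed.

Lemma PLC_weight n (f : {ffun spauli n -> spauli n}) (E : upauli n) :
  f \in PLC n -> weight (f (0, E)).2 = weight E.
Proof. move=> /PLCP [U [hU <-]]; rewrite ffunE; exact: plc_weight. Qed.

Section Orbit.
Local Open Scope nat_scope.

Definition fiber n (S T : {set spauli n}) :=
  [set f in PLC n | f @: S == T].

Lemma fiberE n (S T : {set spauli n}) f :
  (f \in fiber S T) = (f \in PLC n) && (f @: S == T).
Proof. by rewrite /fiber in_set. Qed.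

Lemma compf_imset n (f g : {ffun spauli n -> spauli n}) (S : {set spauli n}) :
  compf f g @: S = f @: (g @: S).
Proof.
rewrite -imset_comp; apply: eq_imset => s; by rewrite ffunE.
Qed.

Lemma fiber_le n (S T : {set spauli n}) (f g : {ffun spauli n -> spauli n}) :
  f \in PLC n -> (forall s, g (f s) = s) ->
  #|fiber S T| <= #|fiber S (f @: T)|.
Proof.
move=> hf hgf.
rewrite -(@card_in_imset _ _ (compf f)).
  apply: subset_leq_card; apply/subsetP => _ /imsetP [h hh ->].
  move: hh; rewrite !fiberE => /andP [hP /eqP hS].
  by rewrite PLC_comp //= compf_imset hS.
move=> h1 h2 _ _ /ffunP e; apply/ffunP => s.
by have := e s; rewrite !ffunE => /(congr1 g); rewrite !hgf.
Qed.

Lemma fiber_card n (S T : {set spauli n}) :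
  T \in code_orbit S -> #|fiber S T| = #|fiber S S|.
Proof.
case/imsetP => f hf ->.
have [g hg [h1 h2]] := PLC_inv hf.
apply/eqP; rewrite eqn_leq; apply/andP; split.
  apply: (leq_trans (@fiber_le n S (f @: S) g f hg h2)).
  by rewrite -imset_comp (eq_imset _ h1) imset_id.
exact: (@fiber_le n S S f g hf h1).
Qed.

Lemma card_PLC n (S : {set spauli n}) :
  #|PLC n| = #|code_orbit S| * #|fiber S S|.
Proof.
rewrite -sum1_card (partition_big (fun f : {ffun spauli n -> spauli n} => f @: S) (mem (code_orbit S))).
  rewrite -sum_nat_const; apply: eq_bigr => T hT.
  rewrite -(fiber_card hT) -sum1_card; apply: eq_bigl => f.
  by rewrite fiberE.
by move=> f hf; apply/imsetP; exists f.
Qed.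
End Orbit.

Lemma sum_card_fiber (T1 T2 : finType) (A : {set T1}) (h : T1 -> T2) :
  (\sum_(e : T2) #|[set f in A | h f == e]| = #|A|)%N.
Proof.
rewrite -sum1_card (partition_big h predT) //=; apply: eq_bigr => e _.
by rewrite -sum1_card; apply: eq_bigl => f; rewrite inE.
Qed.

Section TV.
Variable R : realType.

Lemma absmin (x y : R) : `|x - y| = x + y - 2 * Num.min x y.
Proof. rewrite minr_absE; lra. Qed.

Lemma min_ge0 (x y : R) : 0 <= x -> 0 <= y -> 0 <= Num.min x y.
Proof. by move=> hx hy; rewrite le_min hx hy. Qed.

Lemma sum_min (I : finType) (x : I -> R) (c : R) :
  (forall i, 0 <= x i) -> 0 <= c ->
  Num.min (\sum_i x i) c <= \sum_i Num.min (x i) c.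
Proof.
move=> hx hc; case: (boolP [exists i, c <= x i]).
  case/fintype.existsP => i hi; rewrite [X in _ <= X](bigD1 i) //= (min_r hi).
  apply: (@le_trans _ _ c); first by rewrite ge_min lexx orbT.
  by rewrite lerDl; apply: sumr_ge0 => j _; apply: min_ge0.
rewrite negb_exists => /fintype.forallP h.
have -> : \sum_i Num.min (x i) c = \sum_i x i.
  by apply: eq_bigr => i _; rewrite min_l // ltW // ltNge h.
by rewrite ge_min lexx.
Qed.

Variables (n : nat) (S : {set spauli n}) (E : upauli n).

Local Notation w := (weight E).
Local Notation N := #|[set p : upauli n | weight p == weight E]|.
Local Notation O := (code_orbit S).
Local Notation p := (joint_law R S E).
Local Notation q := (fun z : upauli n * {set spauli n} => unif_w R w z.1 * unif_orbit R S z.2).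

Lemma id_in_fiber : [ffun s => s] \in fiber S S.
Proof.
rewrite fiberE PLC_id /=; apply/eqP; rewrite -[RHS]imset_id.
by apply: eq_imset => s; rewrite ffunE.
Qed.

Lemma G_pos : (0 < #|PLC n|)%N.
Proof. by apply/card_gt0P; exists [ffun s => s]; exact: PLC_id. Qed.

Lemma F_pos : (0 < #|fiber S S|)%N.
Proof. by apply/card_gt0P; exists [ffun s => s]; exact: id_in_fiber. Qed.

Lemma S_in_O : S \in O.
Proof. by move: id_in_fiber; rewrite fiberE => /andP [h /eqP e]; apply/imsetP; exists [ffun s => s]. Qed.

Lemma O_pos : (0 < #|O|)%N.
Proof. by apply/card_gt0P; exists S; exact: S_in_O. Qed.

Lemma N_pos : (0 < N)%N.
Proof. by apply/card_gt0P; exists E; rewrite inE. Qed.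

Lemma p_ge0 z : 0 <= p z.
Proof. by rewrite /joint_law divr_ge0 // ler0n. Qed.

Lemma q_ge0 z : 0 <= q z.
Proof.
rewrite /unif_w /unif_orbit mulr_ge0 //.
  by case: ifP => _ //; rewrite divr_ge0 // ler0n.
by case: ifP => _ //; rewrite divr_ge0 // ler0n.
Qed.

Lemma sum_p : \sum_z p z = 1.
Proof.
rewrite /joint_law -mulr_suml -natr_sum sum_card_fiber divff //.
by rewrite pnatr_eq0 -lt0n G_pos.
Qed.

Lemma sum_q : \sum_z q z = 1.
Proof.
rewrite -(pair_bigA _ (fun e T => unif_w R w e * unif_orbit R S T)) /=.
under eq_bigr => e _ do rewrite -mulr_sumr.
rewrite -mulr_suml.
have -> : \sum_T unif_orbit R S T = 1.
  rewrite /unif_orbit -big_mkcond /= sumr_const -[_ *+ _]mulr_natr mul1r.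
  by rewrite mulVf // pnatr_eq0 -lt0n O_pos.
rewrite mulr1 /unif_w -big_mkcond /= sumr_const.
have -> : #|[pred e : upauli n | weight e == weight E]| = N.
  by apply: eq_card => e; rewrite !inE.
by rewrite -[_ *+ _]mulr_natr mul1r mulVf // pnatr_eq0 -lt0n N_pos.
Qed.

Lemma p_zero e T : weight e != w -> p (e, T) = 0.
Proof.
move=> he; rewrite /joint_law.
suff -> : [set f in PLC n | ((f (0, E)).2, f @: S) == (e, T)] = set0.
  by rewrite cards0 mul0r.
apply/setP => f; rewrite !inE; apply/negP => /andP [hf /eqP [e1 _]].
move: he; rewrite -e1 PLC_weight ?eqxx //; by rewrite inE.
Qed.

Lemma sum_p_T T : T \in O -> \sum_e p (e, T) = (#|O|%:R)^-1.
Proof.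
move=> hT; rewrite /joint_law -mulr_suml -natr_sum.
have E1 : forall e, [set f in PLC n | ((f (0, E)).2, f @: S) == (e, T)]
     = [set f in fiber S T | (f (0, E)).2 == e].
  move=> e; apply/setP => f; rewrite !inE xpair_eqE.
  by case: (f @: S == T); case: ((f (0, E)).2 == e); rewrite ?andbT ?andbF.
under eq_bigr => e _ do rewrite E1.
rewrite sum_card_fiber (fiber_card hT) (card_PLC S) natrM.
have hF : (#|fiber S S|%:R : R) != 0 by rewrite pnatr_eq0 -lt0n F_pos.
have hO : (#|O|%:R : R) != 0 by rewrite pnatr_eq0 -lt0n O_pos.
by rewrite invfM mulrCA mulfV // mulr1.
Qed.

Lemma overlap : (N%:R)^-1 <= \sum_z Num.min (p z) (q z).
Proof.
have -> : \sum_z Num.min (p z) (q z) = \sum_T \sum_e Num.min (p (e, T)) (q (e, T)).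
  rewrite exchange_big pair_bigA; apply: eq_bigr => [[e T]] _ //.
rewrite (bigID (fun T => T \in O)) /=.
have hNpos : (0 : R) < N%:R by rewrite ltr0n N_pos.
have hOpos : (0 : R) < #|O|%:R by rewrite ltr0n O_pos.
set c : R := (N%:R * #|O|%:R)^-1.
have hc : 0 <= c by rewrite invr_ge0 mulr_ge0 // ltW.
have hrest : 0 <= \sum_(T | T \notin O) \sum_e Num.min (p (e, T)) (q (e, T)).
  apply: sumr_ge0 => T _; apply: sumr_ge0 => e _.
  by apply: min_ge0; [apply: p_ge0 | apply: q_ge0].
apply: (@le_trans _ _ (\sum_(T | T \in O) \sum_e Num.min (p (e, T)) (q (e, T)))); last first.
  by rewrite lerDl.
apply: (@le_trans _ _ (\sum_(T | T \in O) c)).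
  rewrite sumr_const -[c *+ _]mulr_natl /c [X in _ <= X]mulrC invfM.
  by rewrite -mulrA mulVf ?mulr1 // gt_eqF.
apply: ler_sum => T hT.
have -> : \sum_e Num.min (p (e, T)) (q (e, T)) = \sum_e Num.min (p (e, T)) c.
  apply: eq_bigr => e _ /=; rewrite /unif_w /unif_orbit hT.
  case: eqP => [_|/eqP ne]; first by rewrite /c invfM !div1r.
  by rewrite p_zero // mul0r !min_l.
apply: (le_trans _ (@sum_min _ (fun e => p (e, T)) c (fun e => p_ge0 _) hc)).
rewrite sum_p_T // min_r //.
rewrite /c invfM ler_piMl ?invr_ge0 ?ler0n //.
by rewrite invf_le1 // ler1n N_pos.
Qed.

Lemma tv_le : tv_joint_product R w S E <= 1 - (N%:R)^-1.
Proof.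
rewrite /tv_joint_product /tv_dist.
under eq_bigr => z _ do rewrite absmin.
rewrite sumrB big_split /= sum_p sum_q -mulr_sumr.
have := overlap; set m := \sum_z _; move=> hm.
lra.
Qed.
End TV.

Lemma part2 (R : realType) :
  (forall (c : nat) (A : R), (0 < c)%N -> 0 < A ->
    exists B : R, 0 < B /\
      forall (n k : nat) (S : {set spauli n}) (E : upauli n),
        (0 < n)%N -> Stab n k S ->
        (weight E)%:R <= A * (ln (n%:R : R)) ^+ c ->
        tv_joint_product R (weight E) S E
          <= 1 - 1 / (B * (n%:R `^ (A * (ln (n%:R : R)) ^+ c)))).
Proof.
move=> c A hc hA; exists 6; split; first by rewrite ltr0n.
move=> n k S E hn hS hw.
apply: (le_trans (tv_le R S E)).
set W := A * _ in hw *.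
set N := #|[set p : upauli n | weight p == weight E]|.
have hN : (0 < N)%N by apply/card_gt0P; exists E; rewrite inE.
have hn1 : (1 : R) <= n%:R by rewrite ler1n.
have hpow : (n%:R : R) ^+ weight E <= n%:R `^ W.
  rewrite -powR_mulrn ?ler0n //; exact: ler_powR.
have hNle : (N%:R : R) <= 6 * n%:R `^ W.
  apply: (@le_trans _ _ (6 * (n%:R : R) ^+ weight E)); last first.
    by rewrite ler_pM2l ?ltr0n.
  by rewrite -natrX -natrM ler_nat Nw_le.
have hNpos : (0 : R) < N%:R by rewrite ltr0n.
have hinv : (6 * n%:R `^ W)^-1 <= (N%:R : R)^-1.
  by rewrite lef_pV2 ?posrE // (lt_le_trans hNpos hNle).
rewrite div1r; lra.
Qed.
Theorem mainTheorem10 (R : realType) :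
  (forall (n k : nat) (S : {set spauli n}) (E : upauli n)
          (x : {ffun 'I_k -> bool}) (Uenc U : 'M[algC]_(2 ^ n)),
      Stab n k S -> is_encoder k S Uenc -> is_clifford U ->
      U *m (pmat E *m enc_state Uenc x)
        = (U *m pmat E *m adj U) *m (U *m enc_state Uenc x)
      /\ U *m pmat E *m adj U = smat (conj_sp U (0, E))
      /\ Stab n k (conj_set U S)
      /\ is_encoder k (conj_set U S) (U *m Uenc)
      /\ U *m enc_state Uenc x = enc_state (U *m Uenc) x)
  /\
  (forall (c : nat) (A : R), (0 < c)%N -> 0 < A ->
    exists B : R, 0 < B /\
      forall (n k : nat) (S : {set spauli n}) (E : upauli n),
        (0 < n)%N -> Stab n k S ->
        (weight E)%:R <= A * (ln (n%:R : R)) ^+ c ->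
        tv_joint_product R (weight E) S E
          <= 1 - 1 / (B * (n%:R `^ (A * (ln (n%:R : R)) ^+ c)))).
Proof.
split; first exact: part1.
exact: part2.
Qed.
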